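(* Let $\rho_S$ be a symmetric state on $\mathbb{C}^3\otimes\mathbb{C}^3$ of the form $$\rho_S=\sum_{0\le i\le j\le 2}p_{ij}\,|D_{ij}\rangle\langle D_{ij}| \;+\;\big(\alpha\,|D_{11}\rangle\langle D_{02}| + \alpha^*\,|D_{02}\rangle\langle D_{11}|\big),$$ with $p_{ij}\ge0$, $\sum p_{ij}=1$, whose coefficients satisfy $p_{11}=2p_{02}=\sqrt{2}\,\alpha$. Then $\rho_S$ is separable if and only if it is PPT.
   Context: The two-qutrit Dicke states are $|D_{ii}\rangle=|ii\rangle$ and $|D_{ij}\rangle=(|ij\rangle+|ji\rangle)/\sqrt2$ for $i\ne j$, with $\{|0\rangle,|1\rangle,|2\rangle\}$ the computational basis of $\mathbb{C}^3$. Separable means a convex combination of product states $|a\rangle\langle a|\otimes|b\rangle\langle b|$; PPT means the partial transpose with respect to one subsystem is positive semidefinite. *)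

(* Defs.v *)
(* Complex scalars: an arbitrary numClosedFieldType C
   (e.g. R[i] for a real closed field R). *)
From HB Require Import structures.
From mathcomp Require Import all_boot all_order all_algebra.
Set Implicit Arguments. Unset Strict Implicit. Unset Printing Implicit Defensive.
Import Order.TTheory GRing.Theory Num.Theory.
Local Open Scope ring_scope.

Section QutritDefs.
Variable C : numClosedFieldType.

Definition adj m n (A : 'M[C]_(m, n)) : 'M[C]_(n, m) := (map_mx Num.conj A)^T.

Definition proj n (v : 'cV[C]_n) : 'M[C]_n := v *m adj v.

(* positive semidefinite: <x|A|x> >= 0 for all x (order of C, so real and >= 0) *)
Definition psd n (A : 'M[C]_n) : Prop := forall x : 'cV[C]_n, 0 <= (adj x *m A *m x) 0 0.

Definition unit_vec n (v : 'cV[C]_n) : Prop := (adj v *m v) 0 0 = 1.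

Definition ket (i j : 'I_3) : 'cV[C]_(3 * 3) := delta_mx (mxvec_index i j) 0.

Definition tens (a b : 'cV[C]_3) : 'cV[C]_(3 * 3) :=
  \sum_(i < 3) \sum_(j < 3) (a i 0 * b j 0) *: ket i j.

Definition ptrans (A : 'M[C]_(3 * 3)) : 'M[C]_(3 * 3) :=
  \sum_(i < 3) \sum_(j < 3) \sum_(k < 3) \sum_(l < 3)
     A (mxvec_index i j) (mxvec_index k l) *:
       delta_mx (mxvec_index i l) (mxvec_index k j).

Definition PPT (A : 'M[C]_(3 * 3)) : Prop := psd (ptrans A).

Definition separable (A : 'M[C]_(3 * 3)) : Prop :=
  exists (n : nat) (w : 'I_n -> C) (a b : 'I_n -> 'cV[C]_3),
    [/\ forall k, 0 <= w k,
        \sum_(k < n) w k = 1,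
        forall k, unit_vec (a k) /\ unit_vec (b k) &
        A = \sum_(k < n) w k *: proj (tens (a k) (b k))].

Definition dicke (i j : 'I_3) : 'cV[C]_(3 * 3) :=
  if i == j then ket i i else (sqrtC 2)^-1 *: (ket i j + ket j i).

Definition q0 : 'I_3 := @Ordinal 3 0 isT.
Definition q1 : 'I_3 := @Ordinal 3 1 isT.
Definition q2 : 'I_3 := @Ordinal 3 2 isT.

Definition rhoS (p : 'I_3 -> 'I_3 -> C) (alpha : C) : 'M[C]_(3 * 3) :=
  \sum_(i < 3) \sum_(j < 3 | (i <= j)%N) p i j *: proj (dicke i j)
  + alpha *: (dicke q1 q1 *m adj (dicke q0 q2))
  + Num.conj alpha *: (dicke q0 q2 *m adj (dicke q1 q1)).

End QutritDefs.

(* Main.v *)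
Require Import Defs.
From HB Require Import structures.
From mathcomp Require Import all_boot all_order all_algebra.
From mathcomp Require Import ring lra zify.
Import Order.TTheory GRing.Theory Num.Theory.
Local Open Scope ring_scope.

Set Implicit Arguments. Unset Strict Implicit. Unset Printing Implicit Defensive.

Section Basics.
Variable C : numClosedFieldType.

Definition E (A : 'M[C]_(3 * 3)) i j k l := A (mxvec_index i j) (mxvec_index k l).

Lemma E_inj (A B : 'M[C]_(3 * 3)) : (forall i j k l, E A i j k l = E B i j k l) -> A = B.
Proof.
move=> h; apply/matrixP => r c.
case/mxvec_indexP: r => i j; case/mxvec_indexP: c => k l; exact: h.
Qed.

Lemma mxvec_index_eq (i j k l : 'I_3) :
  (mxvec_index i j == mxvec_index k l) = (i == k) && (j == l).
Proof.
rewrite /mxvec_index (inj_eq (@cast_ord_inj _ _ _)) (inj_eq enum_rank_inj).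
by rewrite xpair_eqE.
Qed.

Lemma ord3P (i : 'I_3) : [\/ i = q0, i = q1 | i = q2].
Proof.
case: i => [[|[|[|n]]] hi].
- by apply: Or31; apply/val_inj.
- by apply: Or32; apply/val_inj.
- by apply: Or33; apply/val_inj.
- by [].
Qed.

Lemma sum3 (F : 'I_3 -> C) : \sum_(i < 3) F i = F q0 + F q1 + F q2.
Proof.
rewrite !big_ord_recr big_ord0 /= GRing.add0r.
congr (F _ + F _ + F _); by apply/val_inj.
Qed.

Lemma sum_delta (i : 'I_3) (F : 'I_3 -> C) : \sum_(a < 3) (i == a)%:R * F a = F i.
Proof.
rewrite (bigD1 i) //= eqxx mul1r big1 ?addr0 // => a; rewrite eq_sym => /negbTE ->.
by rewrite mul0r.
Qed.

Lemma ketE (i j k l : 'I_3) : ket C i j (mxvec_index k l) 0 = ((k == i) && (l == j))%:R.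
Proof. by rewrite /ket mxE mxvec_index_eq eqxx andbT. Qed.

Lemma natr_and4 (x : C) (b1 b2 : bool) : x * (b1 && b2)%:R = b1%:R * (b2%:R * x).
Proof. by case: b1; case: b2; rewrite /= ?mulr0 ?mul0r ?mulr1 ?mul1r. Qed.

Lemma tensE (a b : 'cV[C]_3) (k l : 'I_3) : tens a b (mxvec_index k l) 0 = a k 0 * b l 0.
Proof.
rewrite /tens summxE.
under eq_bigr => i _ do (rewrite summxE; under eq_bigr => j _ do rewrite mxE ketE natr_and4).
under eq_bigr => i _ do rewrite -mulr_sumr sum_delta.
by rewrite sum_delta.
Qed.

Lemma projE n (v : 'cV[C]_n) r c : proj v r c = v r 0 * (v c 0)^*.
Proof. by rewrite /proj /adj mxE big_ord1 !mxE. Qed.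

Lemma natr_and_4 (x : C) (b1 b2 b3 b4 : bool) :
  x * ((b1 && b2) && (b3 && b4))%:R = b1%:R * (b4%:R * (b3%:R * (b2%:R * x))).
Proof. by case: b1; case: b2; case: b3; case: b4; rewrite /= ?mulr0 ?mul0r ?mulr1 ?mul1r. Qed.

Lemma ptransE (A : 'M[C]_(3 * 3)) i j k l : E (ptrans A) i j k l = E A i l k j.
Proof.
rewrite /E /ptrans summxE.
under eq_bigr => a _ do (rewrite summxE; under eq_bigr => b _ do (rewrite summxE;
  under eq_bigr => c _ do (rewrite summxE; under eq_bigr => d _ do
   rewrite mxE mxE !mxvec_index_eq natr_and_4))).
under eq_bigr => a _ do (under eq_bigr => b _ do (under eq_bigr => c _ do
  rewrite -!mulr_sumr sum_delta; rewrite -!mulr_sumr sum_delta); rewrite -!mulr_sumr sum_delta).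
by rewrite sum_delta.
Qed.

Lemma adjE m n (A : 'M[C]_(m, n)) i j : adj A i j = (A j i)^*.
Proof. by rewrite /adj !mxE. Qed.

Lemma qformE n (A : 'M[C]_n) (x : 'cV[C]_n) :
  (adj x *m A *m x) 0 0 = \sum_c (\sum_r (x r 0)^* * A r c) * x c 0.
Proof. rewrite mxE; apply: eq_bigr => c _; rewrite mxE; congr (_ * _).
by apply: eq_bigr => r _; rewrite adjE.
Qed.

Lemma psd_proj n (v : 'cV[C]_n) : psd (proj v).
Proof.
move=> x; rewrite qformE.
have -> : \sum_c (\sum_r (x r 0)^* * proj v r c) * x c 0 =
   (\sum_r (x r 0)^* * v r 0) * (\sum_r (x r 0)^* * v r 0)^*.
  rewrite rmorph_sum mulr_sumr; apply: eq_bigr => c _.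
  rewrite !mulr_suml; apply: eq_bigr => r _.
  rewrite projE rmorphM /= conjCK; ring.
by rewrite -normCK exprn_ge0.
Qed.

Lemma psdD n (A B : 'M[C]_n) : psd A -> psd B -> psd (A + B).
Proof.
move=> hA hB x; have := hA x; have := hB x; rewrite !qformE => h1 h2.
have -> : \sum_c (\sum_r (x r 0)^* * (A + B) r c) * x c 0 =
  \sum_c (\sum_r (x r 0)^* * A r c) * x c 0 + \sum_c (\sum_r (x r 0)^* * B r c) * x c 0.
  rewrite -big_split; apply: eq_bigr => c _ /=; rewrite -mulrDl -big_split /=.
  by congr (_ * _); apply: eq_bigr => r _; rewrite mxE mulrDr.
exact: addr_ge0.
Qed.

Lemma psdZ n (A : 'M[C]_n) c : 0 <= c -> psd A -> psd (c *: A).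
Proof.
move=> hc hA x; have := hA x; rewrite !qformE => h.
have -> : \sum_i (\sum_r (x r 0)^* * (c *: A) r i) * x i 0 =
  c * \sum_i (\sum_r (x r 0)^* * A r i) * x i 0.
  rewrite mulr_sumr; apply: eq_bigr => i _; rewrite mulrA mulr_sumr; congr (_ * _).
  by apply: eq_bigr => r _; rewrite mxE; ring.
exact: mulr_ge0.
Qed.

Lemma psd0 n : psd (0 : 'M[C]_n).
Proof. move=> x; rewrite qformE big1 // => c _; rewrite big1 ?mul0r // => r _; by rewrite mxE mulr0. Qed.

Lemma psd_sum n m (w : 'I_m -> C) (F : 'I_m -> 'M[C]_n) :
  (forall k, 0 <= w k) -> (forall k, psd (F k)) -> psd (\sum_k w k *: F k).
Proof.
move=> hw hF; apply: (big_ind (fun A => psd A)); [exact: psd0 | exact: psdD |].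
by move=> k _; apply: psdZ.
Qed.

Lemma E_add A B i j k l : E (A + B) i j k l = E A i j k l + E B i j k l.
Proof. by rewrite /E mxE. Qed.
Lemma E_scale c A i j k l : E (c *: A) i j k l = c * E A i j k l.
Proof. by rewrite /E mxE. Qed.
Lemma E_sum m (F : 'I_m -> 'M[C]_(3 * 3)) i j k l : E (\sum_r F r) i j k l = \sum_r E (F r) i j k l.
Proof. by rewrite /E summxE. Qed.
Lemma E_proj_tens (a b : 'cV[C]_3) i j k l : E (proj (tens a b)) i j k l = a i 0 * b j 0 * (a k 0 * b l 0)^*.
Proof. by rewrite /E projE !tensE. Qed.

Lemma ptrans_sum m (w : 'I_m -> C) (F : 'I_m -> 'M[C]_(3 * 3)) :
  ptrans (\sum_r w r *: F r) = \sum_r w r *: ptrans (F r).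
Proof.
apply: E_inj => i j k l; rewrite ptransE !E_sum; apply: eq_bigr => r _.
by rewrite !E_scale ptransE.
Qed.

Lemma ptrans_proj_tens (a b : 'cV[C]_3) : ptrans (proj (tens a b)) = proj (tens a (map_mx Num.conj b)).
Proof.
apply: E_inj => i j k l; rewrite ptransE !E_proj_tens !mxE.
by rewrite !rmorphM /= !conjCK; ring.
Qed.

Lemma sep_PPT (A : 'M[C]_(3 * 3)) : separable A -> PPT A.
Proof.
case=> n [w [a [b [hw _ _ ->]]]]; rewrite /PPT ptrans_sum.
apply: psd_sum => // k; rewrite ptrans_proj_tens; exact: psd_proj.
Qed.

End Basics.

Section Rho.
Variable C : numClosedFieldType.

Definition dk (a b i j : 'I_3) : C :=
  if a == b then ((i == a) && (j == a))%:R
  else (sqrtC 2)^-1 * (((i == a) && (j == b))%:R + ((i == b) && (j == a))%:R).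

Lemma dickeE a b i j : dicke C a b (mxvec_index i j) 0 = dk a b i j.
Proof. rewrite /dicke /dk; case: (a == b); rewrite /ket !mxE !mxvec_index_eq !eqxx !andbT //. Qed.

Lemma E_mul_adj (u v : 'cV[C]_(3 * 3)) i j k l :
  E (u *m adj v) i j k l = u (mxvec_index i j) 0 * (v (mxvec_index k l) 0)^*.
Proof. by rewrite /E mxE big_ord1 adjE. Qed.

Lemma sumle0 (F : 'I_3 -> C) : \sum_(b < 3 | (q0 <= b)%N) F b = F q0 + F q1 + F q2.
Proof. by rewrite big_mkcond sum3. Qed.
Lemma sumle1 (F : 'I_3 -> C) : \sum_(b < 3 | (q1 <= b)%N) F b = F q1 + F q2.
Proof. by rewrite big_mkcond sum3 /= GRing.add0r. Qed.
Lemma sumle2 (F : 'I_3 -> C) : \sum_(b < 3 | (q2 <= b)%N) F b = F q2.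
Proof. by rewrite big_mkcond sum3 /= !GRing.add0r. Qed.

Variable p : 'I_3 -> 'I_3 -> C.
Variable alpha : C.

Lemma rhoE i j k l : E (rhoS p alpha) i j k l =
  p q0 q0 * (dk q0 q0 i j * (dk q0 q0 k l)^*) +
  p q0 q1 * (dk q0 q1 i j * (dk q0 q1 k l)^*) +
  p q0 q2 * (dk q0 q2 i j * (dk q0 q2 k l)^*) +
  p q1 q1 * (dk q1 q1 i j * (dk q1 q1 k l)^*) +
  p q1 q2 * (dk q1 q2 i j * (dk q1 q2 k l)^*) +
  p q2 q2 * (dk q2 q2 i j * (dk q2 q2 k l)^*) +
  alpha * (dk q1 q1 i j * (dk q0 q2 k l)^*) +
  alpha^* * (dk q0 q2 i j * (dk q1 q1 k l)^*).
Proof.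
rewrite /rhoS !E_add !E_scale !E_mul_adj !dickeE /E summxE sum3.
rewrite !summxE sumle0 sumle1 sumle2 !mxE !big_ord1 !adjE !dickeE.
by rewrite !addrA.
Qed.

Definition cw (w : nat) : C := match w with
  0 => p q0 q0 | 1 => p q0 q1 / 2 | 2 => p q0 q2 / 2 | 3 => p q1 q2 / 2 | _ => p q2 q2 end.
Definition gg (i j : 'I_3) : C := if (i == q1) && (j == q1) then 2 else 1.
Definition Fp (i j k l : 'I_3) : C :=
  if (i + j == k + l)%N then cw (i + j) * gg i j * gg k l else 0.

Lemma conj_s : (sqrtC 2 : C)^* = sqrtC 2.
Proof. by apply: geC0_conj; rewrite sqrtC_ge0 ler0n. Qed.
Lemma conj_si : ((sqrtC 2)^-1 : C)^* = (sqrtC 2)^-1.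
Proof. by apply: geC0_conj; rewrite invr_ge0 sqrtC_ge0 ler0n. Qed.
Lemma s_neq0 : (sqrtC 2 : C) != 0.
Proof. by rewrite sqrtC_eq0 pnatr_eq0. Qed.

Lemma dk_conj a b i j : (dk a b i j)^* = dk a b i j.
Proof.
apply: geC0_conj; rewrite /dk; case: ifP => _; first exact: ler0n.
by rewrite mulr_ge0 ?invr_ge0 ?sqrtC_ge0 ?ler0n ?addr_ge0.
Qed.

Lemma rhoF (h11 : p q1 q1 = 2 * p q0 q2) (ha : alpha = sqrtC 2 * p q0 q2)
   (hr : (p q0 q2)^* = p q0 q2) i j k l :
  E (rhoS p alpha) i j k l = Fp i j k l.
Proof.
have hs : (sqrtC 2 : C) ^+ 2 = 2 by rewrite sqrtCK.
have hac : (sqrtC 2 * p q0 q2)^* = sqrtC 2 * p q0 q2 by rewrite rmorphM /= conj_s hr.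
rewrite rhoE ha h11 hac !dk_conj.
case: (ord3P i) => ->; case: (ord3P j) => ->; case: (ord3P k) => ->; case: (ord3P l) => ->;
 rewrite /dk /Fp /cw /gg /=;
 (field: hs; by rewrite ?s_neq0 ?pnatr_eq0).
Qed.
End Rho.

Section Phase.
Variable C : numClosedFieldType.

Definition zeta : C := 4.-root (-1).

Lemma z4 : zeta ^+ 4 = -1.
Proof. by rewrite /zeta rootCK. Qed.

Lemma z8 : zeta ^+ 8 = 1.
Proof. by rewrite (_ : 8 = 4 * 2)%N // exprM z4 sqrrN expr1n. Qed.

Lemma znorm : `|zeta| = 1.
Proof.
have h : `|zeta| ^+ 4 = 1 by rewrite -normrX z4 normrN normr1.
by apply/eqP; rewrite -(@geC0_unit_exp _ _ 3) ?h.
Qed.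

Lemma zconj : zeta^* = zeta ^+ 7.
Proof.
have h : zeta * zeta^* = 1 by rewrite -normCK znorm expr1n.
by rewrite -[LHS]mul1r -z8 exprSr -mulrA h mulr1.
Qed.

Lemma geom8 (x : C) : \sum_(r < 8) x ^+ r = (1 + x) * (1 + x ^+ 2) * (1 + x ^+ 4).
Proof. rewrite !big_ord_recr big_ord0 /= GRing.add0r. ring. Qed.

Lemma zpow_mod n : zeta ^+ n = zeta ^+ (n %% 8).
Proof. by rewrite {1}(divn_eq n 8) exprD mulnC exprM z8 expr1n mul1r. Qed.

Lemma psum d : \sum_(r < 8) zeta ^+ (r * d) = if (8 %| d)%N then 8 else 0.
Proof.
under eq_bigr => r _ do rewrite mulnC exprM.
rewrite geom8 zpow_mod /dvdn.
have : (d %% 8 < 8)%N by rewrite ltn_mod.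
move: (d %% 8)%N => e.
have z2 : zeta ^+ 2 ^+ 2 = -1 by rewrite -exprM z4.
have z12 : zeta ^+ 12 = -1 by rewrite (_ : 12 = 8 + 4)%N // exprD z8 z4 mul1r.
have z20 : zeta ^+ 20 = -1 by rewrite (_ : 20 = 8 + 12)%N // exprD z8 z12 mul1r.
have z28 : zeta ^+ 28 = -1 by rewrite (_ : 28 = 8 + 20)%N // exprD z8 z20 mul1r.
case: e => [|[|[|[|[|[|[|[|e]]]]]]]] //= _; rewrite -?exprM.
- rewrite !mul0n expr0; ring.
- by rewrite [zeta ^+ (1 * 4)]z4 addrN mulr0.
- by rewrite [zeta ^+ (2 * 2)]z4 addrN mulr0 mul0r.
- by rewrite [zeta ^+ (3 * 4)]z12 addrN mulr0.
- by rewrite [zeta ^+ 4]z4 addrN !mul0r.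
- by rewrite [zeta ^+ (5 * 4)]z20 addrN mulr0.
- by rewrite [zeta ^+ (6 * 2)]z12 addrN mulr0 mul0r.
- by rewrite [zeta ^+ (7 * 4)]z28 addrN mulr0.
Qed.
End Phase.

Section Atoms.
Variable C : numClosedFieldType.

Definition cv (y l : C) (i : 'I_3) : C := (if i == q0 then 1 else if i == q1 then y else l) / (1 + l).
Definition av (y l : C) (r : nat) : 'cV[C]_3 := \col_(i < 3) (zeta C ^+ (r * i) * cv y l i).

Lemma cv_ge0 y l : 0 <= y -> 0 <= l -> forall i, 0 <= cv y l i.
Proof.
move=> hy hl i; rewrite /cv; apply: divr_ge0; last by rewrite addr_ge0 ?ler01.
by case: ifP => _; [exact: ler01 | case: ifP].
Qed.

Lemma av_conj y l r i : 0 <= y -> 0 <= l ->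
  (av y l r i 0)^* = zeta C ^+ (7 * (r * i)) * cv y l i.
Proof.
move=> hy hl; rewrite mxE rmorphM /= rmorphXn /= zconj -exprM geC0_conj //.
exact: cv_ge0.
Qed.

Lemma div8 (i j k l : 'I_3) : (8 %| i + j + 7 * k + 7 * l)%N = (i + j == k + l)%N.
Proof.
by case: (ord3P i) => ->; case: (ord3P j) => ->; case: (ord3P k) => ->; case: (ord3P l) => ->.
Qed.

Lemma atomE y l w i j k l' : 0 <= y -> 0 <= l ->
  E (\sum_(r < 8) (w / 8) *: proj (tens (av y l r) (av y l r))) i j k l' =
  w * ((i + j == k + l')%N)%:R * (cv y l i * cv y l j * cv y l k * cv y l l').
Proof.
move=> hy hl; rewrite E_sum.
under eq_bigr => r _ do rewrite E_scale E_proj_tens rmorphM /= !av_conj // !mxE.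
have e (r : 'I_8) : zeta C ^+ (r * i) * cv y l i * (zeta C ^+ (r * j) * cv y l j) *
    (zeta C ^+ (7 * (r * k)) * cv y l k * (zeta C ^+ (7 * (r * l')) * cv y l l')) =
   (cv y l i * cv y l j * cv y l k * cv y l l') * zeta C ^+ (r * (i + j + 7 * k + 7 * l')).
  have -> : (r * (i + j + 7 * k + 7 * l') = r * i + r * j + 7 * (r * k) + 7 * (r * l'))%N.
    lia.
  rewrite !exprD; ring.
under eq_bigr => r _ do rewrite e mulrA.
rewrite -mulr_sumr psum div8.
case: (i + j == k + l')%N => /=; field; by rewrite ?pnatr_eq0.
Qed.

End Atoms.

Section Cone.
Variable C : numClosedFieldType.

Definition cone (A : 'M[C]_(3 * 3)) (t : C) :=
  exists n (w : 'I_n -> C) (a b : 'I_n -> 'cV[C]_3),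
    [/\ forall k, 0 <= w k, \sum_k w k = t,
        forall k, unit_vec (a k) /\ unit_vec (b k) &
        A = \sum_k w k *: proj (tens (a k) (b k))].

Definition sel n1 n2 T (f : 'I_n1 -> T) (g : 'I_n2 -> T) (k : 'I_(n1 + n2)) : T :=
  match split k with inl i => f i | inr j => g j end.

Lemma sel_l n1 n2 T (f : 'I_n1 -> T) (g : 'I_n2 -> T) i : sel f g (lshift n2 i) = f i.
Proof. by rewrite /sel -[lshift n2 i]/(unsplit (inl _ i)) unsplitK. Qed.
Lemma sel_r n1 n2 T (f : 'I_n1 -> T) (g : 'I_n2 -> T) i : sel f g (rshift n1 i) = g i.
Proof. by rewrite /sel -[rshift n1 i]/(unsplit (inr _ i)) unsplitK. Qed.

Lemma cone_add (A B : 'M[C]_(3 * 3)) t u : cone A t -> cone B u -> cone (A + B) (t + u).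
Proof.
case=> n1 [w1 [a1 [b1 [hw1 hs1 hu1 ->]]]]; case=> n2 [w2 [a2 [b2 [hw2 hs2 hu2 ->]]]].
exists (n1 + n2)%N, (sel w1 w2), (sel a1 a2), (sel b1 b2); split.
- by move=> k; rewrite /sel; case: (split k).
- by rewrite big_split_ord /=; under eq_bigr => i _ do rewrite sel_l;
     under [X in _ + X]eq_bigr => i _ do rewrite sel_r; rewrite hs1 hs2.
- by move=> k; rewrite /sel; case: (split k).
- rewrite big_split_ord /=; under [X in _ = X + _]eq_bigr => i _ do rewrite !sel_l.
  by under [X in _ = _ + X]eq_bigr => i _ do rewrite !sel_r.
Qed.

Lemma cone_single w (a b : 'cV[C]_3) : 0 <= w -> unit_vec a -> unit_vec b ->
  cone (w *: proj (tens a b)) w.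
Proof.
move=> hw ha hb; exists 1%N, (fun _ => w), (fun _ => a), (fun _ => b); split => //.
- by rewrite big_ord1.
- by rewrite big_ord1.
Qed.

Lemma sep_cone (A : 'M[C]_(3 * 3)) : cone A 1 -> separable A.
Proof. by case=> n [w [a [b [h1 h2 h3 h4]]]]; exists n, w, a, b; split. Qed.

Lemma unit_e (i : 'I_3) : unit_vec (delta_mx i 0 : 'cV[C]_3).
Proof.
rewrite /unit_vec mxE sum3 !adjE !mxE !rmorph_nat.
by case: (ord3P i) => -> /=; ring.
Qed.

Lemma unit_av y l r : 0 <= y -> 0 <= l -> y ^+ 2 = 2 * l -> unit_vec (av (C:=C) y l r).
Proof.
move=> hy hl hyl; rewrite /unit_vec mxE sum3 !adjE !av_conj // !mxE.
have hz (n : nat) : zeta C ^+ (7 * n) * zeta C ^+ n = 1.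
  by rewrite -exprD (_ : 7 * n + n = 8 * n)%N ?exprM ?z8 ?expr1n //; lia.
have hl1 : 0 < 1 + l by apply: (lt_le_trans ltr01); rewrite lerDl.
have hl2 : 1 + l != 0 by rewrite gt_eqF.
rewrite /cv /=.
field: (hz (r * q0)%N) (hz (r * q1)%N) (hz (r * q2)%N) hyl; by rewrite hl2.
Qed.

End Cone.

Section Decomp.
Variable C : numClosedFieldType.

Lemma cone_atoms (y l w : C) : 0 <= y -> 0 <= l -> y ^+ 2 = 2 * l -> 0 <= w ->
  cone (\sum_(r < 8) (w / 8) *: proj (tens (av y l r) (av y l r))) w.
Proof.
move=> hy hl hyl hw; exists 8%N, (fun _ => w / 8), (fun r => av y l r), (fun r => av y l r).
split => //.
- by move=> _; rewrite divr_ge0 ?ler0n.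
- by rewrite sumr_const card_ord -mulr_natr; field.
- by move=> k; split; apply: unit_av.
Qed.

Variable p : 'I_3 -> 'I_3 -> C.
Variable alpha : C.

Lemma decomp (c0 c4 W1 W2 l1 l2 : C) :
  0 <= c0 -> 0 <= c4 -> 0 <= W1 -> 0 <= W2 -> 0 <= l1 -> 0 <= l2 ->
  p q1 q1 = 2 * p q0 q2 -> alpha = sqrtC 2 * p q0 q2 -> (p q0 q2)^* = p q0 q2 ->
  \sum_(i < 3) \sum_(j < 3 | (i <= j)%N) p i j = 1 ->
  p q0 q0 = c0 + W1 + W2 ->
  p q0 q1 = 4 * (W1 * l1 + W2 * l2) ->
  p q0 q2 = 2 * (W1 * l1 ^+ 2 + W2 * l2 ^+ 2) ->
  p q1 q2 = 4 * (W1 * l1 ^+ 3 + W2 * l2 ^+ 3) ->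
  p q2 q2 = c4 + W1 * l1 ^+ 4 + W2 * l2 ^+ 4 ->
  separable (rhoS p alpha).
Proof.
move=> hc0 hc4 hW1 hW2 hl1 hl2 h11 ha hr hsum hp00 hp01 hp02 hp12 hp22.
pose y1 := sqrtC (2 * l1); pose y2 := sqrtC (2 * l2).
have hy1 : y1 ^+ 2 = 2 * l1 by rewrite sqrtCK.
have hy2 : y2 ^+ 2 = 2 * l2 by rewrite sqrtCK.
have hy1p : 0 <= y1 by rewrite sqrtC_ge0 mulr_ge0 ?ler0n.
have hy2p : 0 <= y2 by rewrite sqrtC_ge0 mulr_ge0 ?ler0n.
have hL1 : 0 < 1 + l1 by apply: (lt_le_trans ltr01); rewrite lerDl.
have hL2 : 0 < 1 + l2 by apply: (lt_le_trans ltr01); rewrite lerDl.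
have hL1' : 1 + l1 != 0 by rewrite gt_eqF.
have hL2' : 1 + l2 != 0 by rewrite gt_eqF.
pose w1 := W1 * (1 + l1) ^+ 4; pose w2 := W2 * (1 + l2) ^+ 4.
pose e0 : 'cV[C]_3 := delta_mx q0 0; pose e2 : 'cV[C]_3 := delta_mx q2 0.
have hD : cone (c0 *: proj (tens e0 e0) + c4 *: proj (tens e2 e2) +
    \sum_(r < 8) (w1 / 8) *: proj (tens (av y1 l1 r) (av y1 l1 r)) +
    \sum_(r < 8) (w2 / 8) *: proj (tens (av y2 l2 r) (av y2 l2 r))) (c0 + c4 + w1 + w2).
  apply: cone_add; [apply: cone_add; [apply: cone_add|] | ].
  - by apply: cone_single => //; apply: unit_e.
  - by apply: cone_single => //; apply: unit_e.
  - by apply: cone_atoms => //; rewrite mulr_ge0 // exprn_ge0 // ltW.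
  - by apply: cone_atoms => //; rewrite mulr_ge0 // exprn_ge0 // ltW.
have htot : c0 + c4 + w1 + w2 = 1.
  rewrite -hsum sum3 sumle0 sumle1 sumle2 h11 hp00 hp01 hp02 hp12 hp22 /w1 /w2; ring.
rewrite htot in hD; apply: sep_cone; move: hD.
suff -> : rhoS p alpha = c0 *: proj (tens e0 e0) + c4 *: proj (tens e2 e2) +
    \sum_(r < 8) (w1 / 8) *: proj (tens (av y1 l1 r) (av y1 l1 r)) +
    \sum_(r < 8) (w2 / 8) *: proj (tens (av y2 l2 r) (av y2 l2 r)) by [].
apply: E_inj => i j k l.
rewrite rhoF // !E_add !E_scale !E_proj_tens !atomE // /e0 /e2 /w1 /w2.
case: (ord3P i) => ->; case: (ord3P j) => ->; case: (ord3P k) => ->; case: (ord3P l) => ->;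
 rewrite /Fp /cw /gg /cv !mxE /= ?rmorph_nat ?hp00 ?hp01 ?hp02 ?hp12 ?hp22;
 (field: hy1 hy2; by rewrite ?hL1' ?hL2' ?pnatr_eq0).
Qed.
End Decomp.

Section Forms.
Variable C : numClosedFieldType.

Lemma sum_pair (F : 'I_(3 * 3) -> C) :
  \sum_(r < 3 * 3) F r = \sum_(i < 3) \sum_(j < 3) F (mxvec_index i j).
Proof.
rewrite pair_big /= (reindex (fun p : 'I_3 * 'I_3 => mxvec_index p.1 p.2)) //.
have [g h1 h2] := curry_mxvec_bij 3 3.
exists g => [[i j] _|k _]; first exact: (h1 (i, j)).
by move: (h2 k isT); case: (g k).
Qed.

Definition vecf (f : 'I_3 -> 'I_3 -> C) : 'cV[C]_(3 * 3) := \sum_(i < 3) \sum_(j < 3) f i j *: ket C i j.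

Lemma vecfE f k l : vecf f (mxvec_index k l) 0 = f k l.
Proof.
rewrite /vecf summxE.
under eq_bigr => i _ do (rewrite summxE; under eq_bigr => j _ do rewrite mxE ketE natr_and4).
under eq_bigr => i _ do rewrite -mulr_sumr sum_delta.
by rewrite sum_delta.
Qed.

Lemma qform_pairs (A : 'M[C]_(3 * 3)) (f : 'I_3 -> 'I_3 -> C) :
  psd A -> (forall i j, (f i j)^* = f i j) ->
  0 <= \sum_(k < 3) \sum_(l < 3) (\sum_(i < 3) \sum_(j < 3) f i j * E A i j k l) * f k l.
Proof.
move=> hA hf; have := hA (vecf f); rewrite qformE sum_pair.
under eq_bigr => k _ do (under eq_bigr => l _ do rewrite sum_pair vecfE;
   under eq_bigr => l _ do (under eq_bigr => i _ do (under eq_bigr => j _ do rewrite vecfE hf))).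
by [].
Qed.

End Forms.

Section Ineqs.
Variable C : numClosedFieldType.
Variable p : 'I_3 -> 'I_3 -> C.
Variable alpha : C.
Hypothesis h11 : p q1 q1 = 2 * p q0 q2.
Hypothesis ha : alpha = sqrtC 2 * p q0 q2.
Hypothesis hr : (p q0 q2)^* = p q0 q2.
Hypothesis hP : PPT (rhoS p alpha).

Lemma realC (x : C) : x \is Num.real -> x^* = x.
Proof. by move=> h; apply/eqP; rewrite -CrealE. Qed.

Lemma keyPT i j k l : E (ptrans (rhoS p alpha)) i j k l = Fp p i l k j.
Proof. by rewrite ptransE rhoF. Qed.

Lemma hankelP (u0 u1 u2 : C) : u0 \is Num.real -> u1 \is Num.real -> u2 \is Num.real ->
  0 <= p q0 q0 * u0 ^+ 2 + p q0 q1 / 2 * u0 * u1 + p q0 q2 * u0 * u2 + p q0 q2 / 2 * u1 ^+ 2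
       + p q1 q2 / 2 * u1 * u2 + p q2 q2 * u2 ^+ 2.
Proof.
move=> r0 r1 r2.
pose f (i j : 'I_3) : C := if (i == q0) && (j == q0) then u0 else
   if (i == q1) && (j == q1) then u1 / 2 else if (i == q2) && (j == q2) then u2 else 0.
have hf : forall i j, (f i j)^* = f i j.
  move=> i j; rewrite /f; case: ifP => _; first exact: realC.
  case: ifP => _; first by apply: realC; rewrite rpredM // rpredV rpred_nat.
  by case: ifP => _; [exact: realC | exact: rmorph0].
have := qform_pairs hP hf; rewrite !sum3 !keyPT /f /Fp /cw /gg /=.
set L := (X in 0 <= X) => h; set R := (X in _ <= X).
suff -> : R = L by [].
rewrite /L /R; field; by rewrite ?pnatr_eq0.
Qed.

Lemma hankelS (v0 v1 : C) : v0 \is Num.real -> v1 \is Num.real ->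
  0 <= p q0 q1 / 2 * v0 ^+ 2 + 2 * p q0 q2 * v0 * v1 + p q1 q2 / 2 * v1 ^+ 2.
Proof.
move=> r0 r1.
pose f (i j : 'I_3) : C := if (i == q0) && (j == q1) then v0 else
   if (i == q1) && (j == q2) then v1 else 0.
have hf : forall i j, (f i j)^* = f i j.
  move=> i j; rewrite /f; case: ifP => _; first exact: realC.
  by case: ifP => _; [exact: realC | exact: rmorph0].
have := qform_pairs hP hf; rewrite !sum3 !keyPT /f /Fp /cw /gg /=.
set L := (X in 0 <= X) => h; set R := (X in _ <= X).
suff -> : R = L by [].
rewrite /L /R; field; by rewrite ?pnatr_eq0.
Qed.
End Ineqs.

Unset Implicit Arguments.

Section M.
Variable F : numFieldType.
Variables m1 m2 m3 m4 s R : F.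
Definition mz := m1 * (s * m1 - m2) / (s * m2 - m3).
Definition mW1 := (m1 * s - 2 * m2 + R) * (m1 * s + R) * m1 / (4 * R * (s * m2 - m3)).
Definition mW2 := (R - (m1 * s - 2 * m2)) * (m1 * s - R) * m1 / (4 * R * (s * m2 - m3)).
Definition ml1 := (m1 * s - R) / (2 * m1).
Definition ml2 := (m1 * s + R) / (2 * m1).
Definition mc4 := m4 - (s * (m1 * m3 - m2 ^+ 2) + m2 * m3) / m1.
Hypothesis hR : R ^+ 2 = (m1 * s - 2 * m2) ^+ 2 + 4 * (m1 * m3 - m2 ^+ 2).
Hypothesis hP : s * m2 - m3 != 0.
Hypothesis hR0 : R != 0.
Hypothesis h1 : m1 != 0.
Lemma mom0 : mW1 + mW2 = mz.
Proof. rewrite /mW1 /mW2 /mz. field: hR. by rewrite ?hP ?hR0 ?h1 ?pnatr_eq0. Qed.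
Lemma mom1 : mW1 * ml1 + mW2 * ml2 = m1.
Proof. rewrite /mW1 /mW2 /ml1 /ml2. field: hR. by rewrite ?hP ?hR0 ?h1 ?pnatr_eq0. Qed.
Lemma mom2 : mW1 * ml1 ^+ 2 + mW2 * ml2 ^+ 2 = m2.
Proof. rewrite /mW1 /mW2 /ml1 /ml2. field: hR. by rewrite ?hP ?hR0 ?h1 ?pnatr_eq0. Qed.
Lemma mom3 : mW1 * ml1 ^+ 3 + mW2 * ml2 ^+ 3 = m3.
Proof. rewrite /mW1 /mW2 /ml1 /ml2. field: hR. by rewrite ?hP ?hR0 ?h1 ?pnatr_eq0. Qed.
Lemma mom4 : mW1 * ml1 ^+ 4 + mW2 * ml2 ^+ 4 + mc4 = m4.
Proof. rewrite /mW1 /mW2 /ml1 /ml2 /mc4. field: hR. by rewrite ?hP ?hR0 ?h1 ?pnatr_eq0. Qed.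
End M.

Section Moment.
Variable C : numClosedFieldType.

Lemma neg_sq (x k : C) : 0 <= x -> 0 < k -> 0 <= - (x ^+ 2 * k) -> x = 0.
Proof.
move=> hx hk h.
have h1 : x ^+ 2 * k <= 0 by rewrite -oppr_ge0.
have h2 : 0 <= x ^+ 2 * k by rewrite mulr_ge0 ?exprn_ge0 // ltW.
have : x ^+ 2 * k == 0 by rewrite eq_le h1 h2.
by rewrite mulf_eq0 (gt_eqF hk) orbF expf_eq0 /= => /eqP.
Qed.

Lemma pos2 (u v : C) : u \is Num.real -> v \is Num.real -> 0 <= u + v -> 0 < u * v ->
  0 < u /\ 0 < v.
Proof.
move=> ru rv hs hp.
have hu : 0 < u.
  rewrite real_ltNge ?real0 //; apply/negP => hu0.
  have hu1 : u < 0.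
    rewrite lt_neqAle hu0 andbT; apply: contraTneq hp => ->; by rewrite mul0r ltxx.
  have hv1 : v < 0 by rewrite -(nmulr_rgt0 _ hu1).
  have : u + v < 0 by rewrite -[0](addr0 0) ltrD.
  by move=> h; have := lt_le_trans h hs; rewrite ltxx.
by split => //; move: hp; rewrite pmulr_rgt0.
Qed.
End Moment.

Arguments mc4 {F}. Arguments mW1 {F}. Arguments mW2 {F}. Arguments ml1 {F}.
Arguments ml2 {F}. Arguments mz {F}.
Arguments mom0 {F m1 m2 m3 s R}. Arguments mom1 {F m1 m2 m3 s R}. Arguments mom2 {F m1 m2 m3 s R}.
Arguments mom3 {F m1 m2 m3 s R}. Arguments mom4 {F m1 m2 m3 m4 s R}.

Ltac realt := repeat first
  [ apply: rpredD | apply: rpredB | apply: rpredM | rewrite rpredN | apply: rpredX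
  | rewrite rpredV | apply: rpred_nat | apply: rpred0 | apply: rpred1
  | assumption | by apply: ger0_real ].

Section MomentMain.
Variable C : numClosedFieldType.

Lemma moment (m0 m1 m2 m3 m4 : C) :
  0 <= m0 -> 0 <= m1 -> 0 <= m2 -> 0 <= m3 -> 0 <= m4 ->
  (forall u0 u1 u2, u0 \is Num.real -> u1 \is Num.real -> u2 \is Num.real ->
     0 <= m0 * u0 ^+ 2 + 2 * m1 * u0 * u1 + 2 * m2 * u0 * u2 + m2 * u1 ^+ 2
          + 2 * m3 * u1 * u2 + m4 * u2 ^+ 2) ->
  (forall v0 v1, v0 \is Num.real -> v1 \is Num.real ->
     0 <= m1 * v0 ^+ 2 + 2 * m2 * v0 * v1 + m3 * v1 ^+ 2) ->
  exists c0 c4 W1 W2 l1 l2 : C,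
    [/\ 0 <= c0, 0 <= c4, 0 <= W1 & [/\ 0 <= W2, 0 <= l1 & 0 <= l2]] /\
    [/\ m0 = c0 + W1 + W2, m1 = W1 * l1 + W2 * l2, m2 = W1 * l1 ^+ 2 + W2 * l2 ^+ 2,
        m3 = W1 * l1 ^+ 3 + W2 * l2 ^+ 3 & m4 = c4 + W1 * l1 ^+ 4 + W2 * l2 ^+ 4].
Proof.
move=> h0 h1 h2 h3 h4 hQ hS.
have [hm2|hm2] := eqVneq m2 0.
  have hm1 : m1 = 0.
    apply: (@neg_sq _ m1 (m0 + 2)) => //; first by rewrite ltr_wpDl // ltr0n.
    have := hQ m1 (- (m0 + 1)) 0; rewrite hm2.
    have -> : m0 * m1 ^+ 2 + 2 * m1 * m1 * - (m0 + 1) + 2 * 0 * m1 * 0 + 0 * (- (m0 + 1)) ^+ 2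
      + 2 * m3 * - (m0 + 1) * 0 + m4 * 0 ^+ 2 = - (m1 ^+ 2 * (m0 + 2)) by ring.
    by move=> h; apply: h; realt.
  have hm3 : m3 = 0.
    apply: (@neg_sq _ m3 (m4 + 2)) => //; first by rewrite ltr_wpDl // ltr0n.
    have := hQ 0 (- (m4 + 1)) m3; rewrite hm2.
    have -> : m0 * 0 ^+ 2 + 2 * m1 * 0 * - (m4 + 1) + 2 * 0 * 0 * m3 + 0 * (- (m4 + 1)) ^+ 2
      + 2 * m3 * - (m4 + 1) * m3 + m4 * m3 ^+ 2 = - (m3 ^+ 2 * (m4 + 2)) by ring.
    by move=> h; apply: h; realt.
  exists m0, m4, 0, 0, 0, 0; split; first by do !split.
  by split; rewrite ?hm1 ?hm2 ?hm3; ring.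
pose Qf u0 u1 u2 := m0 * u0 ^+ 2 + 2 * m1 * u0 * u1 + 2 * m2 * u0 * u2 + m2 * u1 ^+ 2
          + 2 * m3 * u1 * u2 + m4 * u2 ^+ 2.
pose Sf v0 v1 := m1 * v0 ^+ 2 + 2 * m2 * v0 * v1 + m3 * v1 ^+ 2.
have hQ' : forall u0 u1 u2, u0 \is Num.real -> u1 \is Num.real -> u2 \is Num.real ->
  0 <= Qf u0 u1 u2 := hQ.
have hS' : forall v0 v1, v0 \is Num.real -> v1 \is Num.real -> 0 <= Sf v0 v1 := hS.
have r0 : m0 \is Num.real by apply: ger0_real.
have r1 : m1 \is Num.real by apply: ger0_real.
have r2 : m2 \is Num.real by apply: ger0_real.
have r3 : m3 \is Num.real by apply: ger0_real.
have r4 : m4 \is Num.real by apply: ger0_real.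
have hm2p : 0 < m2 by rewrite lt_def hm2 h2.
have hm1 : m1 != 0.
  apply/eqP => hm1; move/eqP: hm2; apply.
  apply: (@neg_sq _ m2 (m3 + 2)) => //; first by rewrite ltr_wpDl // ltr0n.
  have := hS' (m3 + 1) (- m2); rewrite (_ : Sf _ _ = - (m2 ^+ 2 * (m3 + 2))).
    by move=> h; apply: h; realt.
  by rewrite /Sf hm1; ring.
have hm1p : 0 < m1 by rewrite lt_def hm1 h1.
have hB : 0 <= m1 * m3 - m2 ^+ 2.
  rewrite -(pmulr_rge0 _ hm1p).
  have := hS' m2 (- m1); rewrite (_ : Sf _ _ = m1 * (m1 * m3 - m2 ^+ 2)).
    by move=> h; apply: h; realt.
  by rewrite /Sf; ring.
have hA : 0 <= m0 * m2 - m1 ^+ 2.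
  rewrite -(pmulr_rge0 _ hm2p).
  have := hQ' m2 (- m1) 0; rewrite (_ : Qf _ _ _ = m2 * (m0 * m2 - m1 ^+ 2)).
    by move=> h; apply: h; realt.
  by rewrite /Qf; ring.
have hCc : 0 <= m2 * m4 - m3 ^+ 2.
  rewrite -(pmulr_rge0 _ hm2p).
  have := hQ' 0 m3 (- m2); rewrite (_ : Qf _ _ _ = m2 * (m2 * m4 - m3 ^+ 2)).
    by move=> h; apply: h; realt.
  by rewrite /Qf; ring.
have [hB0|hB0] := eqVneq (m1 * m3 - m2 ^+ 2) 0.
  have hm3 : m3 = m2 ^+ 2 / m1.
    apply: (mulfI hm1); move/eqP: hB0; rewrite subr_eq0 => /eqP ->.
    by field.
  exists ((m0 * m2 - m1 ^+ 2) / m2), ((m2 * m4 - m3 ^+ 2) / m2), (m1 ^+ 2 / m2), 0, (m2 / m1), 0.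
  split.
    split; [exact: divr_ge0 hA (ltW hm2p) | exact: divr_ge0 hCc (ltW hm2p)
           | exact: divr_ge0 (exprn_ge0 _ h1) (ltW hm2p) | split; [done | exact: divr_ge0 h2 h1 | done]].
  by split; rewrite ?hm3; field; rewrite ?hm1 ?hm2.
have hBp : 0 < m1 * m3 - m2 ^+ 2 by rewrite lt_def hB0 hB.
have rB : m1 * m3 - m2 ^+ 2 \is Num.real by apply: ger0_real.
have hAn : m0 * m2 - m1 ^+ 2 != 0.
  apply/eqP => hA0.
  have hm0 : m0 = m1 ^+ 2 / m2.
    apply: (mulIf (lt0r_neq0 hm2p)); move/eqP: hA0; rewrite subr_eq0 => /eqP ->.
    by field; rewrite lt0r_neq0.
  have h41 : 0 < m4 + 1 by rewrite ltr_wpDl // ltr01.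
  move/eqP: hB0; apply.
  apply: (@neg_sq _ (m1 * m3 - m2 ^+ 2) ((m4 + 2) / (m4 + 1) ^+ 2)) => //.
    by rewrite divr_gt0 ?exprn_gt0 // ltr_wpDl // ltr0n.
  have := hQ' m2 (- m1) ((m1 * m3 - m2 ^+ 2) / (m4 + 1));
    rewrite (_ : Qf _ _ _ = - ((m1 * m3 - m2 ^+ 2) ^+ 2 * ((m4 + 2) / (m4 + 1) ^+ 2))).
    by move=> h; apply: h; realt.
  by rewrite /Qf hm0; field; rewrite ?lt0r_neq0.
have hAp : 0 < m0 * m2 - m1 ^+ 2 by rewrite lt_def hAn hA.
pose A := m0 * m2 - m1 ^+ 2.
pose B := m1 * m3 - m2 ^+ 2.
pose s := (m0 * m3 - m1 * m2) / A.
have rA : A \is Num.real by apply: ger0_real; apply: ltW.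
have rs : s \is Num.real by rewrite /s; realt.
have hsA : s * m2 - m3 = m1 * B / A by rewrite /s /A /B; field.
have hsm : m1 * s = m2 + m0 * B / A by rewrite /s /A /B; field.
have hBA : 0 < B / A by rewrite divr_gt0.
have hP : 0 < s * m2 - m3 by rewrite hsA -mulrA mulr_gt0.
have hms : 0 < m1 * s by rewrite hsm ltr_wpDr // -mulrA mulr_ge0 // ltW.
pose X := m1 * s - 2 * m2.
have rX : X \is Num.real by rewrite /X; realt.
pose R := sqrtC (X ^+ 2 + 4 * B).
have hXB : 0 < X ^+ 2 + 4 * B.
  by rewrite ltr_wpDl ?real_exprn_even_ge0 // mulr_gt0 // ltr0n.
have hR2 : R ^+ 2 = X ^+ 2 + 4 * B by rewrite sqrtCK.
have hRp : 0 < R by rewrite sqrtC_gt0.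
have rR : R \is Num.real by apply: ger0_real; apply: ltW.
clearbody R.
have [hXR1 hXR2] : 0 < R + X /\ 0 < R - X.
  apply: pos2; try realt.
    by rewrite (_ : R + X + (R - X) = 2 * R) ?mulr_ge0 ?ler0n ?ltW //; ring.
  rewrite (_ : (R + X) * (R - X) = R ^+ 2 - X ^+ 2); last by ring.
  by rewrite hR2 addrAC subrr GRing.add0r mulr_gt0 ?ltr0n.
have [hSR1 hSR2] : 0 < m1 * s + R /\ 0 < m1 * s - R.
  apply: pos2; try realt.
    rewrite (_ : m1 * s + R + (m1 * s - R) = 2 * (m1 * s)); last by ring.
    by rewrite mulr_ge0 ?ler0n // ltW.
  rewrite (_ : (m1 * s + R) * (m1 * s - R) = 4 * m1 * (s * m2 - m3)).
    by rewrite !mulr_gt0 ?ltr0n.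
  rewrite (_ : (m1 * s + R) * (m1 * s - R) = (m1 * s) ^+ 2 - R ^+ 2); last by ring.
  by rewrite hR2 /X /B; ring.
have hdet : 0 <= m0 * m2 * m4 - m1 ^+ 2 * m4 - m0 * m3 ^+ 2 + 2 * m1 * m2 * m3 - m2 ^+ 3.
  rewrite -(pmulr_rge0 _ hAp).
  have := hQ' B (- (m0 * m3 - m1 * m2)) A; rewrite (_ : Qf _ _ _ = (m0 * m2 - m1 ^+ 2) *
     (m0 * m2 * m4 - m1 ^+ 2 * m4 - m0 * m3 ^+ 2 + 2 * m1 * m2 * m3 - m2 ^+ 3)).
    by move=> h; apply: h; realt.
  by rewrite /Qf /A /B; ring.
have hc4 : 0 <= mc4 m1 m2 m3 m4 s.
  rewrite (_ : mc4 m1 m2 m3 m4 s = (m0 * m2 * m4 - m1 ^+ 2 * m4 - m0 * m3 ^+ 2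
     + 2 * m1 * m2 * m3 - m2 ^+ 3) / A).
    by rewrite divr_ge0 // ltW.
  by rewrite /mc4 /s /A; field; rewrite hAn hm1.
have hRR : R ^+ 2 = (m1 * s - 2 * m2) ^+ 2 + 4 * (m1 * m3 - m2 ^+ 2) by exact: hR2.
have hPn : s * m2 - m3 != 0 by rewrite lt0r_neq0.
have hRn : R != 0 by rewrite lt0r_neq0.
have hsm' : s * m1 - m2 = m0 * B / A by rewrite /s /A /B; field.
exists 0, (mc4 m1 m2 m3 m4 s), (mW1 m1 m2 m3 s R), (mW2 m1 m2 m3 s R), (ml1 m1 s R), (ml2 m1 s R).
split.
  split => //.
  - rewrite /mW1; apply: divr_ge0; last by rewrite !mulr_ge0 ?ler0n // ltW.
    rewrite !mulr_ge0 // ltW // addrC; exact: hXR1.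
  - split.
    + rewrite /mW2; apply: divr_ge0; last by rewrite !mulr_ge0 ?ler0n // ltW.
      rewrite !mulr_ge0 // ltW //; exact: hXR2.
    + by rewrite /ml1 divr_ge0 ?mulr_ge0 ?ler0n // ltW.
    + by rewrite /ml2 divr_ge0 ?mulr_ge0 ?ler0n // ltW.
split.
- rewrite GRing.add0r (mom0 hRR hPn hRn) /mz hsA hsm'; field.
  by rewrite hm1 hAn hB0.
- by rewrite (mom1 hRR hPn hRn hm1).
- by rewrite (mom2 hRR hPn hRn hm1).
- by rewrite (mom3 hRR hPn hRn hm1).
- have e4 := @mom4 _ m1 m2 m3 m4 s R hRR hPn hRn hm1; rewrite -{1}e4; ring.
Qed.
End MomentMain.

Theorem corollary1 (C : numClosedFieldType) (p : 'I_3 -> 'I_3 -> C) (alpha : C) :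
  (forall i j : 'I_3, (i <= j)%N -> 0 <= p i j) ->
  \sum_(i < 3) \sum_(j < 3 | (i <= j)%N) p i j = 1 ->
  psd (rhoS p alpha) ->
  p q1 q1 = 2 * p q0 q2 ->
  2 * p q0 q2 = sqrtC 2 * alpha ->
  (separable (rhoS p alpha) <-> PPT (rhoS p alpha)).
Proof.
move=> hp hsum _ h11 h2.
split; first exact: sep_PPT.
move=> hP.
have h20 : (2 : C) != 0 by rewrite pnatr_eq0.
have hs2 : sqrtC 2 * sqrtC 2 = 2 :> C by rewrite -expr2 sqrtCK.
have ha : alpha = sqrtC 2 * p q0 q2.
  have e : sqrtC 2 * (2 * p q0 q2) = 2 * alpha by rewrite h2 mulrA hs2.
  apply: (mulfI h20); rewrite -e; ring.
have hr : (p q0 q2)^* = p q0 q2 by apply: geC0_conj; exact: hp.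
have p00 : 0 <= p q0 q0 by exact: hp.
have p01 : 0 <= p q0 q1 by exact: hp.
have p02 : 0 <= p q0 q2 by exact: hp.
have p12 : 0 <= p q1 q2 by exact: hp.
have p22 : 0 <= p q2 q2 by exact: hp.
have hQ : forall u0 u1 u2, u0 \is Num.real -> u1 \is Num.real -> u2 \is Num.real ->
   0 <= p q0 q0 * u0 ^+ 2 + 2 * (p q0 q1 / 4) * u0 * u1 + 2 * (p q0 q2 / 2) * u0 * u2 +
    p q0 q2 / 2 * u1 ^+ 2 + 2 * (p q1 q2 / 4) * u1 * u2 + p q2 q2 * u2 ^+ 2.
  move=> u0 u1 u2 r0 r1 r2; have := hankelP h11 ha hr hP r0 r1 r2.
  suff -> : p q0 q0 * u0 ^+ 2 + 2 * (p q0 q1 / 4) * u0 * u1 + 2 * (p q0 q2 / 2) * u0 * u2 +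
    p q0 q2 / 2 * u1 ^+ 2 + 2 * (p q1 q2 / 4) * u1 * u2 + p q2 q2 * u2 ^+ 2 =
    p q0 q0 * u0 ^+ 2 + p q0 q1 / 2 * u0 * u1 + p q0 q2 * u0 * u2 + p q0 q2 / 2 * u1 ^+ 2
       + p q1 q2 / 2 * u1 * u2 + p q2 q2 * u2 ^+ 2 by [].
  by field.
have hS : forall v0 v1, v0 \is Num.real -> v1 \is Num.real ->
   0 <= p q0 q1 / 4 * v0 ^+ 2 + 2 * (p q0 q2 / 2) * v0 * v1 + p q1 q2 / 4 * v1 ^+ 2.
  move=> v0 v1 r0 r1; have := hankelS h11 ha hr hP r0 r1 => h.
  suff -> : p q0 q1 / 4 * v0 ^+ 2 + 2 * (p q0 q2 / 2) * v0 * v1 + p q1 q2 / 4 * v1 ^+ 2 =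
    (p q0 q1 / 2 * v0 ^+ 2 + 2 * p q0 q2 * v0 * v1 + p q1 q2 / 2 * v1 ^+ 2) / 2.
    by rewrite divr_ge0 ?ler0n.
  by field.
have [c0 [c4 [W1 [W2 [l1 [l2 [[hc0 hc4 hW1 [hW2 hl1 hl2]] [e0 e1 e2 e3 e4]]]]]]]] :=
  @moment C (p q0 q0) (p q0 q1 / 4) (p q0 q2 / 2) (p q1 q2 / 4) (p q2 q2)
   p00 (divr_ge0 p01 (ler0n _ _)) (divr_ge0 p02 (ler0n _ _)) (divr_ge0 p12 (ler0n _ _)) p22 hQ hS.
apply: (@decomp C p alpha c0 c4 W1 W2 l1 l2) => //.
- by rewrite -e1; field.
- by rewrite -e2; field.
- by rewrite -e3; field.
Qed.
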